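(* For every $n\ge0$, $$P_n=\sum_{m=0}^{\lfloor n/2\rfloor}\frac{q^{-m(2m+1-2\delta_{n\equiv t})}}{(1-q^{-4})(1-q^{-8})\cdots(1-q^{-4m})}\Delta_{n-2m},\qquad \Delta_n=\sum_{m=0}^{\lfloor n/2\rfloor}(-1)^m\frac{q^{-m(2\delta_{n\not\equiv t}+1)}}{(1-q^{-4})(1-q^{-8})\cdots(1-q^{-4m})}P_{n-2m}.$$
   Context: Fix $t\in\{0,1\}$. Let $\mathbf U^\imath_t=\mathbb Q(q)[B]$ be the polynomial algebra in $B$ over $\mathbb Q(q)$, $[n]=(q^n-q^{-n})/(q-q^{-1})$, $[n]!=[1]\cdots[n]$; $\delta_{n\equiv t}$ is $1$ if $n\equiv t\pmod2$ and $0$ otherwise, and $\delta_{n\not\equiv t}=1-\delta_{n\equiv t}$. The PBW basis $\Delta_n$ is defined by $\Delta_0=1$, $B\Delta_n=[n+1]\Delta_{n+1}+\frac{q^{n-1}}{1-q^{-2}}\Delta_{n-1}$ ($\Delta_{-1}=0$). The $\imath$-canonical basis is $P_n=\frac{B^{\sigma_t(n)}}{[n]!}\prod_{0\le k\le n-1,\ k\equiv t\ (2)}(B^2-[k]^2)$, where $\sigma_t(n)=0$ for $n$ even, $-1$ for $n$ odd and $t=0$, $1$ for $n$ odd and $t=1$ (when $\sigma_t(n)=-1$ the product contains the factor $B^2$, so $P_n$ is a polynomial). *)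

(* Defs.v *)
From HB Require Import structures.
From mathcomp Require Import all_boot all_order all_algebra.
Set Implicit Arguments. Unset Strict Implicit. Unset Printing Implicit Defensive.
Import Order.TTheory GRing.Theory Num.Theory.
Local Open Scope ring_scope.

Definition Qq : fieldType := {fraction {poly rat}}.

Definition q : Qq := FracField.tofrac ('X : {poly rat}).

Definition qpow (z : int) : Qq := q ^ z.

Definition qint (n : nat) : Qq :=
  (qpow n%:Z - qpow (- n%:Z)) / (qpow 1 - qpow (-1)).

Definition qfact (n : nat) : Qq := \prod_(1 <= i < n.+1) qint i.

(* U^i_t = Q(q)[B]; the generator B is the polynomial variable 'X. *)
Notation U := {poly Qq}.

(* (Delta_n, Delta_{n+1}) via the recursion
   B Delta_n = [n+1] Delta_{n+1} + q^{n-1}/(1-q^{-2}) Delta_{n-1},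
   Delta_0 = 1, Delta_{-1} = 0. *)
Fixpoint DeltaPair (n : nat) : U * U :=
  match n with
  | 0 => (1, (qint 1)^-1 *: ('X * 1))
  | n'.+1 =>
      let: (a, b) := DeltaPair n' in
      (b, (qint n'.+2)^-1 *:
            ('X * b - (qpow (n'%:Z) / (1 - qpow (-2))) *: a))
  end.

Definition Delta (n : nat) : U := (DeltaPair n).1.

(* delta_{n = t mod 2}, with t in {0,1} encoded as a bool. *)
Definition dlt (t : bool) (n : nat) : int := if odd n == t then 1 else 0.

(* The iota-canonical basis P_n = B^{sigma_t(n)}/[n]! * prod_{0<=k<n, k = t mod 2}(B^2-[k]^2).
   For sigma_t(n) = -1 the product contains the factor B^2 (k = 0), so the
   division by B is exact; we use polynomial division by 'X. *)
Definition Pprod (t : bool) (n : nat) : U :=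
  \prod_(0 <= k < n | odd k == t) ('X ^+ 2 - ((qint k) ^+ 2)%:P).

Definition P (t : bool) (n : nat) : U :=
  (qfact n)^-1 *:
    (if ~~ odd n then Pprod t n
     else if t then 'X * Pprod t n
     else Pprod t n %/ 'X).

Definition qden (m : nat) : Qq := \prod_(1 <= i < m.+1) (1 - qpow (- (4 * i%:Z))).

(* Main.v *)
Require Import Defs.
From HB Require Import structures.
From mathcomp Require Import zify ring.
From mathcomp Require Import all_boot all_order all_algebra.
Import Order.TTheory GRing.Theory Num.Theory.
Local Open Scope ring_scope.


Lemma q_neq0 : q != 0.
Proof. by rewrite /q tofrac_eq0 polyX_eq0. Qed.

Lemma qXn_neq1 k : (0 < k)%N -> q ^+ k != 1.
Proof.
move=> hk; rewrite /q -tofracXn -tofrac1 tofrac_eq.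
apply/negP => /eqP h.
have := size_polyXn rat k. rewrite h size_poly1.
by case: k hk {h}.
Qed.

Lemma qpowP (n : nat) : qpow n%:Z = q ^+ n.
Proof. by []. Qed.

Lemma qpowN (z : int) : qpow (- z) = (qpow z)^-1.
Proof. by rewrite /qpow invr_expz. Qed.

Lemma qpowD (a b : int) : qpow (a + b) = qpow a * qpow b.
Proof. by rewrite /qpow expfzDr // q_neq0. Qed.

Lemma qXn_neq0 k : q ^+ k != 0.
Proof. by rewrite expf_neq0 // q_neq0. Qed.

Lemma qint_eq n : qint n = (q ^+ n - (q ^+ n)^-1) / (q - q^-1).
Proof. by rewrite /qint qpowN !qpowP expr1. Qed.

Lemma qmq_neq0 : q - q^-1 != 0.
Proof.
rewrite subr_eq0; apply/negP => /eqP h.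
have : q * q = 1 by rewrite {2}h mulfV // q_neq0.
by apply/eqP; rewrite -expr2 qXn_neq1.
Qed.

Lemma qint_neq0 n : (0 < n)%N -> qint n != 0.
Proof.
move=> hn; rewrite qint_eq; apply: mulf_neq0; last by rewrite invr_eq0 qmq_neq0.
rewrite subr_eq0; apply/negP => /eqP h.
have : q ^+ n * q ^+ n = 1 by rewrite {2}h mulfV; [done| exact: qXn_neq0].
apply/eqP; rewrite -exprD; apply: qXn_neq1; by rewrite addn_gt0 hn.
Qed.

Lemma qint0 : qint 0 = 0.
Proof. by rewrite /qint oppr0 subrr mul0r. Qed.

Lemma qfactS n : qfact n.+1 = qfact n * qint n.+1.
Proof. by rewrite /qfact big_nat_recr. Qed.

Lemma qfact_neq0 n : qfact n != 0.
Proof.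
elim: n => [|n IH]; first by rewrite /qfact big_geq // oner_neq0.
rewrite qfactS; apply: mulf_neq0; [exact: IH | exact: qint_neq0].
Qed.

Lemma DeltaS n : Delta n.+2 = (qint n.+2)^-1 *:
   ('X * Delta n.+1 - (qpow n%:Z / (1 - qpow (-2))) *: Delta n).
Proof. by rewrite /Delta /=; case: (DeltaPair n). Qed.

Lemma Delta0 : Delta 0 = 1. Proof. reflexivity. Qed.
Lemma Delta1 : Delta 1 = (qint 1)^-1 *: ('X * Delta 0). Proof. reflexivity. Qed.

Definition R (t : bool) n : U :=
  if ~~ odd n then Pprod t n else if t then 'X * Pprod t n else Pprod t n %/ 'X.

Lemma P_R t n : P t n = (qfact n)^-1 *: R t n. Proof. by []. Qed.

Lemma PprodS t n : Pprod t n.+1 =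
  Pprod t n * (if odd n == t then 'X ^+ 2 - ((qint n) ^+ 2)%:P else 1).
Proof. by rewrite /Pprod big_mkcond big_nat_recr //= -big_mkcond. Qed.

Lemma Pprod0 t : Pprod t 0 = 1.
Proof. by rewrite /Pprod big_geq. Qed.

Lemma dvdX_Pprod n : 'X %| Pprod false n.+1.
Proof.
elim: n => [|n IH].
  rewrite PprodS Pprod0 /= qint0 expr0n /= subr0 mul1r.
  by rewrite expr2 dvdp_mulr // dvdpp.
by rewrite PprodS dvdp_mulr.
Qed.

Lemma R0 t : R t 0 = 1.
Proof. by rewrite /R /= Pprod0. Qed.

Lemma R1 t : R t 1 = 'X.
Proof.
rewrite /R /= PprodS Pprod0 mul1r; case: t => /=; first by rewrite mulr1.
by rewrite qint0 expr0n /= subr0 expr2 mulpK ?polyX_eq0.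
Qed.

Lemma RS t n : R t n.+2 = 'X * R t n.+1 -
   (if odd n.+1 == t then (qint n.+1) ^+ 2 else 0) *: R t n.
Proof.
rewrite /R /= !PprodS.
case: t; case hn: (odd n) => /=; rewrite hn /=.
- move: (Pprod true n) (qint n) => p a.
  rewrite scale0r; ring.
- move: (Pprod true n) (qint n.+1) => p a.
  rewrite -mul_polyC; ring.
- have hd : 'X %| Pprod false n.
    case: n hn => [|n] hn0; [discriminate hn0 | exact: dvdX_Pprod].
  move: (Pprod false n) hd (qint n.+1) => p hd a.
  rewrite -mul_polyC.
  set w := p %/ 'X.
  rewrite -[p](divpK hd) -/w.
  clearbody w.
  have -> : w * 'X * 1 * ('X^2 - (a ^+ 2)%:P) = (w * ('X^2 - (a ^+ 2)%:P)) * 'X by ring.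
  rewrite mulpK ?polyX_eq0 //; ring.
- have hd := dvdX_Pprod n; rewrite PprodS hn /= in hd.
  move: (Pprod false n) (qint n) hd => p a.
  move: (p * ('X^2 - (a ^+ 2)%:P)) => g hd.
  have e : 'X * (g %/ 'X) = g by rewrite mulrC divpK.
  rewrite e scale0r; ring.
Qed.

Lemma P0 t : P t 0 = 1.
Proof.
rewrite P_R R0 /qfact big_geq; last by [].
by rewrite invr1 scale1r.
Qed.

Lemma P1 t : P t 1 = (qint 1)^-1 *: ('X * P t 0).
Proof. by rewrite P0 mulr1 P_R R1 /qfact big_nat1. Qed.

Lemma fe1 (F : fieldType) (f a1 a2 : F) :
  (f * a1 * a2)^-1 = a2^-1 / (f * a1).
Proof. by rewrite invfM mulrC. Qed.

Lemma fe2 (F : fieldType) (f a1 a2 : F) : f != 0 -> a1 != 0 -> a2 != 0 ->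
  (f * a1 * a2)^-1 * a1 ^+ 2 = a2^-1 * a1 / f.
Proof. move=> h0 h1 h2; field; by rewrite h0 h1 h2. Qed.

Lemma PS t n : P t n.+2 = (qint n.+2)^-1 *:
  ('X * P t n.+1 - (if odd n.+1 == t then qint n.+1 else 0) *: P t n).
Proof.
rewrite !P_R RS !qfactS.
have h1 := @qint_neq0 n.+1 (ltn0Sn n).
have h2 := @qint_neq0 n.+2 (ltn0Sn n.+1).
have h0 := qfact_neq0 n.
move: (R t n.+1) (R t n) (qfact n) (qint n.+1) (qint n.+2) h0 h1 h2.
move=> r1 r0 f a1 a2 h0 h1 h2.
rewrite -scalerAr !scalerBr !scalerA.
have e1 := @fe1 _ f a1 a2.
have e2 : (f * a1 * a2)^-1 * (if odd n.+1 == t then a1 ^+ 2 else 0) =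
   a2^-1 * (if odd n.+1 == t then a1 else 0) / f.
  case: (odd n.+1 == t); last by rewrite !mulr0 !mul0r.
  exact: fe2.
by rewrite e2 e1.
Qed.


Definition ext (W : nat -> U) (k : int) : U :=
  match k with Posz n => W n | Negz _ => 0 end.

Definition qintz (k : int) : Qq := (qpow k - qpow (- k)) / (qpow 1 - qpow (-1)).

Lemma ext_neg W k : k < 0 -> ext W k = 0.
Proof. by case: k. Qed.

Lemma qintz0 : qintz 0 = 0.
Proof. by rewrite /qintz oppr0 subrr mul0r. Qed.

Lemma ext_rec (W : nat -> U) (h : int -> Qq) :
  W 1 = (qint 1)^-1 *: ('X * W 0) ->
  (forall n, W n.+2 = (qint n.+2)^-1 *: ('X * W n.+1 - h (n.+1)%:Z *: W n)) ->
  forall k, 'X * ext W k = qintz (k + 1) *: ext W (k + 1) + h k *: ext W (k - 1).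
Proof.
move=> W1 WS [[|n]|j].
- rewrite [ext W (_ - 1)]ext_neg; last by [].
  rewrite scaler0 addr0 add0r /= W1 scalerA.
  have -> : qintz 1 = qint 1 by [].
  rewrite mulfV ?scale1r //; exact: qint_neq0.
- have -> : (n.+1)%:Z - 1 = n%:Z by lia.
  have -> : (n.+1)%:Z + 1 = (n.+2)%:Z by lia.
  have -> : qintz (n.+2)%:Z = qint n.+2 by [].
  rewrite /=.
  rewrite WS scalerA mulfV ?scale1r; last exact: qint_neq0.
  by rewrite subrK.
- rewrite [ext W (_ - 1)]ext_neg; last by [].
  rewrite /= mulr0 scaler0 addr0.
  case: j => [|j]; first by rewrite qintz0 scale0r.
  by rewrite ext_neg ?scaler0.
Qed.


Section FI.
Variable F : fieldType.
Variables (Q x y A : F).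
Hypotheses (hQ : Q != 0) (hx : x != 0) (hy : y != 0) (h2 : Q ^+ 2 - 1 != 0)
  (h4 : (Q * y) ^+ 4 - 1 != 0) (hN : x * Q ^+ 2 * (x * Q ^+ 2) - 1 != 0).
Let h2' : Q * Q - 1 != 0. Proof. by rewrite -expr2. Qed.

Lemma fid1a :
  A / (Q ^+ 3 * y ^+ 4) / (1 - (Q ^+ 4 * y ^+ 4)^-1) * (Q * y) ^+ 2 =
  ((x * Q ^+ 2 - (x * Q ^+ 2)^-1) / (Q - Q^-1))^-1 *
  (A / (Q ^+ 3 * y ^+ 4) / (1 - (Q ^+ 4 * y ^+ 4)^-1) *
   ((x / y ^+ 2 - (x / y ^+ 2)^-1) / (Q - Q^-1)) +
   A * (x / y ^+ 2 / (1 - Q ^- 2))) -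
  ((x * Q ^+ 2 - (x * Q ^+ 2)^-1) / (Q - Q^-1))^-1 * 0 * (A * y ^+ 2).
Proof. field; by rewrite ?hQ ?hx ?hy ?h2 ?h2' ?h4 ?hN. Qed.

Lemma fid1b :
  A / (Q ^+ 3 * y ^+ 4) / (1 - (Q ^+ 4 * y ^+ 4)^-1) =
  ((x * Q ^+ 2 - (x * Q ^+ 2)^-1) / (Q - Q^-1))^-1 *
  (A / (Q ^+ 3 * y ^+ 4) / (1 - (Q ^+ 4 * y ^+ 4)^-1) * (Q * y) ^+ 2 *
   ((x / y ^+ 2 - (x / y ^+ 2)^-1) / (Q - Q^-1)) +
   A * y ^+ 2 * (x / y ^+ 2 / (1 - Q ^- 2))) -
  ((x * Q ^+ 2 - (x * Q ^+ 2)^-1) / (Q - Q^-1))^-1 *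
  ((x * Q - (x * Q)^-1) / (Q - Q^-1)) * A.
Proof. field; by rewrite ?hQ ?hx ?hy ?h2 ?h2' ?h4 ?hN. Qed.

Lemma fid2a :
  - A / (1 - (Q ^+ 4 * y ^+ 4)^-1) / (Q * y) =
  ((x * Q ^+ 2 - (x * Q ^+ 2)^-1) / (Q - Q^-1))^-1 *
  (- A / (1 - (Q ^+ 4 * y ^+ 4)^-1) / (Q * y) ^+ 3 *
   ((x / y ^+ 2 - (x / y ^+ 2)^-1) / (Q - Q^-1)) + 
   A / y ^+ 3 * 0) -
  ((x * Q ^+ 2 - (x * Q ^+ 2)^-1) / (Q - Q^-1))^-1 * (x / (1 - Q ^- 2)) *
  (A / y).
Proof. field; by rewrite ?hQ ?hx ?hy ?h2 ?h2' ?h4 ?hN. Qed.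

Lemma fid2b :
  - A / (1 - (Q ^+ 4 * y ^+ 4)^-1) / (Q * y) ^+ 3 =
  ((x * Q ^+ 2 - (x * Q ^+ 2)^-1) / (Q - Q^-1))^-1 *
  (- A / (1 - (Q ^+ 4 * y ^+ 4)^-1) / (Q * y) *
   ((x / y ^+ 2 - (x / y ^+ 2)^-1) / (Q - Q^-1)) +
   A / y * ((x * Q / y ^+ 2 - (x * Q / y ^+ 2)^-1) / (Q - Q^-1))) -
  ((x * Q ^+ 2 - (x * Q ^+ 2)^-1) / (Q - Q^-1))^-1 * (x / (1 - Q ^- 2)) *
  (A / y ^+ 3).
Proof. field; by rewrite ?hQ ?hx ?hy ?h2 ?h2' ?h4 ?hN. Qed.
End FI.


Section Gen.
Variable F : fieldType.
Local Notation U := {poly F}.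
Variables (Y : int -> U) (Z : nat -> U) (G H2 : int -> F) (al be : nat -> F)
  (c : nat -> nat -> F).
Hypothesis Yneg : forall k, k < 0 -> Y k = 0.
Hypothesis Yrec : forall k, 'X * Y k = G k *: Y (k + 1) + H2 k *: Y (k - 1).
Hypothesis Zrec : forall n, Z n.+2 = al n *: ('X * Z n.+1) - be n *: Z n.
Hypothesis Z0 : Z 0 = c 0 0 *: Y 0.
Hypothesis Z1 : Z 1 = c 1 0 *: Y 1.
Hypothesis c0 : forall n, c n.+2 0 = al n * c n.+1 0 * G n.+1.
Hypothesis cS : forall n m, (2 * m <= n)%N ->
  c n.+2 m.+1 = al n * (c n.+1 m.+1 * G (n%:Z - 1 - 2 * m%:Z)
                        + c n.+1 m * H2 (n%:Z + 1 - 2 * m%:Z)) - be n * c n m.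

Definition Ssum n K := \sum_(0 <= m < K) c n m *: Y (n%:Z - 2 * m%:Z).

Lemma Ssum_trunc n K : (n./2 < K)%N -> Ssum n K = Ssum n (n./2).+1.
Proof.
move=> hK; rewrite /Ssum (big_cat_nat _ (n := (n./2).+1)) //=.
rewrite [X in _ + X]big1_seq ?addr0 // => m /andP [_]; rewrite mem_index_iota => /andP [h1 _].
rewrite Yneg ?scaler0 //.
have : (n < 2 * m)%N.
  by rewrite -(odd_double_half n) -muln2; move: h1; case: (odd n) => /=; lia.
lia.
Qed.

Lemma expand_aux n : Z n = Ssum n (n./2).+1 /\ Z n.+1 = Ssum n.+1 (n.+1./2).+1.
Proof.
elim: n => [|n [IH1 IH2]].
  by rewrite /Ssum !big_nat1 /= Z0 Z1 !mulr0 !subr0.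
split; first exact: IH2.
rewrite Zrec IH1.
have -> : Z n.+1 = Ssum n.+1 (n./2).+2.
  rewrite IH2 Ssum_trunc //.
  by rewrite -(odd_double_half n) -muln2; case: (odd n) => /=; lia.
have eA : forall m : nat, (n.+1)%:Z - 2 * (m.+1)%:Z + 1 = n%:Z - 2 * m%:Z by move=> m; lia.
have eA' : forall m : nat, (n.+1)%:Z - 2 * (m.+1)%:Z = n%:Z - 1 - 2 * m%:Z by move=> m; lia.
have eB : forall m : nat, (n.+1)%:Z - 2 * m%:Z - 1 = n%:Z - 2 * m%:Z by move=> m; lia.
have eB' : forall m : nat, (n.+1)%:Z - 2 * m%:Z = n%:Z + 1 - 2 * m%:Z by move=> m; lia.
have eC : forall m : nat, (n.+2)%:Z - 2 * (m.+1)%:Z = n%:Z - 2 * m%:Z by move=> m; lia.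
have E1 : 'X * Ssum n.+1 (n./2).+2 = (c n.+1 0 * G n.+1) *: Y n.+2 +
   \sum_(0 <= m < (n./2).+1) (c n.+1 m.+1 * G (n%:Z - 1 - 2 * m%:Z)
        + c n.+1 m * H2 (n%:Z + 1 - 2 * m%:Z)) *: Y (n%:Z - 2 * m%:Z).
  rewrite /Ssum mulr_sumr.
  under eq_bigr => m _ do rewrite -scalerAr Yrec scalerDr !scalerA.
  rewrite big_split /= big_nat_recl // [X in _ + X]big_nat_recr //=.
  rewrite [Y (_ - 1)]Yneg; last by lia.
  have e0 : (n.+1)%:Z - 2 * (0%N)%:Z = (n.+1)%:Z by lia.
  rewrite e0 scaler0 addr0 -addrA; congr (_ *: Y _ + _).
    by lia.
  rewrite -big_split /=; apply: eq_bigr => m _.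
  by rewrite eA eA' eB eB' scalerDl.
rewrite E1 /Ssum [in RHS]big_nat_recl //.
have e0 : (n.+2)%:Z - 2 * (0%N)%:Z = (n.+2)%:Z by lia.
rewrite e0 scalerDr scalerA mulrA scaler_sumr -c0 -addrA; congr (_ + _).
rewrite scaler_sumr -sumrB; apply: eq_bigr => m _.
rewrite eC !scalerA -scalerBl.
have [hm|hm] := leqP (2 * m) n.
  by rewrite cS.
by rewrite Yneg ?scaler0 //; lia.
Qed.

Lemma expand n : Z n = Ssum n (n./2).+1.
Proof. by case: (expand_aux n). Qed.
End Gen.


Definition c1 t n m : Qq := qpow (- (m%:Z * (2 * m%:Z + 1 - 2 * dlt t n))) / qden m.
Definition c2 t n m : Qq :=
  (-1) ^+ m * qpow (- (m%:Z * (2 * (1 - dlt t n) + 1))) / qden m.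
Definition Am m : Qq := qpow (- (m%:Z * (2 * m%:Z + 1))) / qden m.
Definition Bm m : Qq := (-1) ^+ m / qden m.

Lemma qpowm2 : qpow (-2) = (q ^+ 2)^-1. Proof. by []. Qed.

Lemma qdenS m : qden m.+1 = qden m * (1 - (q ^+ 4 * (q ^+ m) ^+ 4)^-1).
Proof.
rewrite /qden big_nat_recr //= qpowN.
have -> : 4 * (m.+1)%:Z = ((4 + m * 4)%N)%:Z by lia.
by rewrite qpowP exprD exprM.
Qed.

Lemma c1_d0 t n m : dlt t n = 0 -> c1 t n m = Am m.
Proof. by move=> h; rewrite /c1 h mulr0 subr0. Qed.

Lemma c1_d1 t n m : dlt t n = 1 -> c1 t n m = Am m * (q ^+ m) ^+ 2.
Proof.
move=> h; rewrite /c1 /Am h.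
have -> : - (m%:Z * (2 * m%:Z + 1 - 2 * 1)) = - (m%:Z * (2 * m%:Z + 1)) + ((m * 2)%N)%:Z.
  by ring.
by rewrite qpowD qpowP exprM mulrAC.
Qed.

Lemma fe3 (F : fieldType) (a b c d : F) : a * b / (c * d) = a / c * b / d.
Proof. rewrite invfM; ring. Qed.

Lemma AmS m : Am m.+1 = Am m * (q ^+ 3 * (q ^+ m) ^+ 4)^-1 / (1 - (q ^+ 4 * (q ^+ m) ^+ 4)^-1).
Proof.
rewrite /Am qdenS.
have -> : - ((m.+1)%:Z * (2 * (m.+1)%:Z + 1)) = - (m%:Z * (2 * m%:Z + 1)) + - ((3 + m * 4)%N)%:Z.
  by ring.
rewrite qpowD (qpowN (Posz (3 + m * 4))) qpowP exprD exprM invfM.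
exact: fe3.
Qed.

Lemma c2_d1 t n m : dlt t n = 1 -> c2 t n m = Bm m * (q ^+ m)^-1.
Proof.
move=> h; rewrite /c2 /Bm h.
have -> : - (m%:Z * (2 * (1 - 1) + 1)) = - (m%:Z) by ring.
by rewrite qpowN qpowP mulrAC.
Qed.

Lemma c2_d0 t n m : dlt t n = 0 -> c2 t n m = Bm m * ((q ^+ m) ^+ 3)^-1.
Proof.
move=> h; rewrite /c2 /Bm h.
have -> : - (m%:Z * (2 * (1 - 0) + 1)) = - (((m * 3)%N)%:Z) by ring.
by rewrite qpowN qpowP exprM mulrAC.
Qed.

Lemma fe4 (F : fieldType) (s c d : F) : -1 * s / (c * d) = - (s / c) / d.
Proof. rewrite invfM; ring. Qed.

Lemma BmS m : Bm m.+1 = - Bm m / (1 - (q ^+ 4 * (q ^+ m) ^+ 4)^-1).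
Proof. by rewrite /Bm qdenS exprS fe4. Qed.

Lemma qXsub n m : (2 * m <= n)%N -> q ^+ (n - 2 * m) = q ^+ n / (q ^+ m) ^+ 2.
Proof.
move=> h.
have -> : q ^+ n = q ^+ (n - 2 * m) * (q ^+ m) ^+ 2.
  rewrite -exprM -exprD (_ : (n - 2 * m + m * 2 = n)%N) //; lia.
rewrite mulfK; [by [] | exact: expf_neq0 (qXn_neq0 m)].
Qed.

Lemma dlt_cases t n : ((odd n == t) = true /\ dlt t n = 1 /\ dlt t n.+1 = 0 /\ dlt t n.+2 = 1
    /\ (odd n.+1 == t) = false)
  \/ ((odd n == t) = false /\ dlt t n = 0 /\ dlt t n.+1 = 1 /\ dlt t n.+2 = 0
    /\ (odd n.+1 == t) = true).
Proof. rewrite /dlt /=; case: (odd n); case: t => /=; [left|right|right|left]; by []. Qed.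

Local Opaque Qq.

Lemma cS1 t n m : (2 * m <= n)%N ->
  c1 t n.+2 m.+1 = (qint n.+2)^-1 * (c1 t n.+1 m.+1 * qintz (n%:Z - 1 - 2 * m%:Z + 1)
     + c1 t n.+1 m * (qpow (n%:Z + 1 - 2 * m%:Z - 1) / (1 - qpow (-2))))
   - (qint n.+2)^-1 * (if odd n.+1 == t then qint n.+1 else 0) * c1 t n m.
Proof.
move=> hm.
have e1 : n%:Z - 1 - 2 * m%:Z + 1 = ((n - 2 * m)%N)%:Z by lia.
have e2 : n%:Z + 1 - 2 * m%:Z - 1 = ((n - 2 * m)%N)%:Z by lia.
rewrite e1 e2 qpowP qpowm2.
have -> : qintz ((n - 2 * m)%N)%:Z = qint (n - 2 * m) by [].
have eX2 : q ^+ n.+2 = q ^+ n * q ^+ 2 by rewrite -exprD addn2.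
have eX1 : q ^+ n.+1 = q ^+ n * q by rewrite exprSr.
have eY : q ^+ m.+1 = q * q ^+ m by rewrite exprS.
have hx := qXn_neq0 n.
have hy := qXn_neq0 m.
have hQ := q_neq0.
have h2 : q ^+ 2 - 1 != 0 by rewrite subr_eq0 qXn_neq1.
have h4 : (q * q ^+ m) ^+ 4 - 1 != 0.
  rewrite -exprS -exprM subr_eq0; apply: qXn_neq1; lia.
have hN : q ^+ n * q ^+ 2 * (q ^+ n * q ^+ 2) - 1 != 0.
  rewrite -!exprD subr_eq0; apply: qXn_neq1; lia.
case: (dlt_cases t n) => [[_ [d0 [d1 [d2 b1]]]]|[_ [d0 [d1 [d2 b1]]]]]; rewrite b1.
- rewrite (@c1_d1 t n.+2 m.+1 d2) (@c1_d0 t n.+1 m.+1 d1) (@c1_d0 t n.+1 m d1).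
  rewrite (@c1_d1 t n m d0) AmS !qint_eq eX2 (@qXsub n m hm) eY.
  move: (Am m) (q ^+ n) (q ^+ m) hx hy h4 hN => A x y hx hy h4 hN.
  move: q hQ h2 h4 hN => Q hQ h2 h4 hN.
  exact: (@fid1a Qq Q x y A hQ hx hy h2 h4 hN).
- rewrite (@c1_d0 t n.+2 m.+1 d2) (@c1_d1 t n.+1 m.+1 d1) (@c1_d1 t n.+1 m d1).
  rewrite (@c1_d0 t n m d0) AmS !qint_eq eX2 eX1 (@qXsub n m hm) eY.
  move: (Am m) (q ^+ n) (q ^+ m) hx hy h4 hN => A x y hx hy h4 hN.
  move: q hQ h2 h4 hN => Q hQ h2 h4 hN.
  exact: (@fid1b Qq Q x y A hQ hx hy h2 h4 hN).
Qed.

Lemma cS2 t n m : (2 * m <= n)%N ->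
  c2 t n.+2 m.+1 = (qint n.+2)^-1 * (c2 t n.+1 m.+1 * qintz (n%:Z - 1 - 2 * m%:Z + 1)
     + c2 t n.+1 m * (if odd (absz (n%:Z + 1 - 2 * m%:Z)%R) == t
                      then qintz (n%:Z + 1 - 2 * m%:Z) else 0))
   - (qint n.+2)^-1 * (qpow n%:Z / (1 - qpow (-2))) * c2 t n m.
Proof.
move=> hm.
have e1 : n%:Z - 1 - 2 * m%:Z + 1 = ((n - 2 * m)%N)%:Z by lia.
have e2 : n%:Z + 1 - 2 * m%:Z = ((n.+1 - 2 * m)%N)%:Z by lia.
rewrite e1 e2 qpowP qpowm2.
have -> : qintz ((n - 2 * m)%N)%:Z = qint (n - 2 * m) by [].
have -> : qintz ((n.+1 - 2 * m)%N)%:Z = qint (n.+1 - 2 * m) by [].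
have -> : absz ((n.+1 - 2 * m)%N)%:Z = (n.+1 - 2 * m)%N by [].
have ho : odd (n.+1 - 2 * m) = odd n.+1.
  rewrite oddB ?odd_mul /= ?andFb ?addbF //; lia.
have hm1 : (2 * m <= n.+1)%N by lia.
rewrite ho.
have eX2 : q ^+ n.+2 = q ^+ n * q ^+ 2 by rewrite -exprD addn2.
have eX1 : q ^+ n.+1 = q ^+ n * q by rewrite exprSr.
have eY : q ^+ m.+1 = q * q ^+ m by rewrite exprS.
have hx := qXn_neq0 n.
have hy := qXn_neq0 m.
have hQ := q_neq0.
have h2 : q ^+ 2 - 1 != 0 by rewrite subr_eq0 qXn_neq1.
have h4 : (q * q ^+ m) ^+ 4 - 1 != 0.
  rewrite -exprS -exprM subr_eq0; apply: qXn_neq1; lia.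
have hN : q ^+ n * q ^+ 2 * (q ^+ n * q ^+ 2) - 1 != 0.
  rewrite -!exprD subr_eq0; apply: qXn_neq1; lia.
case: (dlt_cases t n) => [[_ [d0 [d1 [d2 b1]]]]|[_ [d0 [d1 [d2 b1]]]]]; rewrite b1.
- rewrite (@c2_d1 t n.+2 m.+1 d2) (@c2_d0 t n.+1 m.+1 d1) (@c2_d0 t n.+1 m d1).
  rewrite (@c2_d1 t n m d0) BmS !qint_eq eX2 (@qXsub n m hm) eY.
  move: (Bm m) (q ^+ n) (q ^+ m) hx hy h4 hN => A x y hx hy h4 hN.
  move: q hQ h2 h4 hN => Q hQ h2 h4 hN.
  exact: (@fid2a Qq Q x y A hQ hx hy h2 h4 hN).
- rewrite (@c2_d0 t n.+2 m.+1 d2) (@c2_d1 t n.+1 m.+1 d1) (@c2_d1 t n.+1 m d1).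
  rewrite (@c2_d0 t n m d0) BmS !qint_eq eX2 (@qXsub n m hm) (@qXsub n.+1 m hm1) eX1 eY.
  move: (Bm m) (q ^+ n) (q ^+ m) hx hy h4 hN => A x y hx hy h4 hN.
  move: q hQ h2 h4 hN => Q hQ h2 h4 hN.
  exact: (@fid2b Qq Q x y A hQ hx hy h2 h4 hN).
Qed.


Lemma qden0 : qden 0 = 1. Proof. by rewrite /qden big_geq. Qed.

Lemma c1_0 t n : c1 t n 0 = 1.
Proof. by rewrite /c1 /qpow mul0r oppr0 qden0 invr1 mulr1 expr0z. Qed.

Lemma c2_0 t n : c2 t n 0 = 1.
Proof. by rewrite /c2 /qpow mul0r oppr0 qden0 invr1 mulr1 expr0 mul1r expr0z. Qed.

Lemma half_le n m : (m < (n./2).+1)%N -> (2 * m <= n)%N.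
Proof.
move=> h; rewrite -(odd_double_half n) -muln2.
move: h; case: (odd n) => /=; lia.
Qed.

Lemma ext_sub (W : nat -> U) n m : (2 * m <= n)%N ->
  ext W (n%:Z - 2 * m%:Z) = W (n - 2 * m)%N.
Proof. by move=> h; rewrite (_ : n%:Z - 2 * m%:Z = ((n - 2 * m)%N)%:Z) //; lia. Qed.

Lemma part1 t n : P t n =
    \sum_(0 <= m < (n./2).+1)
      (qpow (- (m%:Z * (2 * m%:Z + 1 - 2 * dlt t n))) / qden m)
        *: Delta (n - 2 * m).
Proof.
have Yrec := @ext_rec Delta (fun k => qpow (k - 1) / (1 - qpow (-2))) Delta1.
have Yrec' : forall k : int, 'X * ext Delta k = qintz (k + 1) *: ext Delta (k + 1) +
    (qpow (k - 1) / (1 - qpow (-2))) *: ext Delta (k - 1).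
  apply: Yrec => k; rewrite DeltaS.
  by rewrite (_ : (k.+1)%:Z - 1 = k%:Z) //; lia.
have E := @expand Qq (ext Delta) (P t) (fun k => qintz (k + 1))
  (fun k => qpow (k - 1) / (1 - qpow (-2))) (fun n => (qint n.+2)^-1)
  (fun n => (qint n.+2)^-1 * (if odd n.+1 == t then qint n.+1 else 0)) (c1 t)
  (@ext_neg Delta) Yrec'.
rewrite E.
- rewrite /Ssum; apply: eq_big_nat => m /andP [_ hm].
  by rewrite ext_sub ?half_le.
- by move=> k; rewrite PS scalerBr scalerA.
- by rewrite c1_0 scale1r P0 /=.
- by rewrite c1_0 scale1r /= P1 P0.
- move=> k; rewrite !c1_0 mulr1.
  rewrite (_ : qintz ((k.+1)%:Z + 1) = qint k.+2); last by rewrite (_ : (k.+1)%:Z + 1 = (k.+2)%:Z) //; lia.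
  rewrite mulVf //; exact: qint_neq0.
- exact: cS1.
Qed.

Lemma part2 t n : Delta n =
    \sum_(0 <= m < (n./2).+1)
      ((-1) ^+ m * qpow (- (m%:Z * (2 * (1 - dlt t n) + 1))) / qden m)
        *: P t (n - 2 * m).
Proof.
have Yrec := @ext_rec (P t) (fun k => if odd (absz k) == t then qintz k else 0)
  (P1 t) (PS t).
have E := @expand Qq (ext (P t)) Delta (fun k => qintz (k + 1))
  (fun k => if odd (absz k) == t then qintz k else 0) (fun n => (qint n.+2)^-1)
  (fun n => (qint n.+2)^-1 * (qpow n%:Z / (1 - qpow (-2)))) (c2 t)
  (@ext_neg (P t)) Yrec.
rewrite E.
- rewrite /Ssum; apply: eq_big_nat => m /andP [_ hm].
  by rewrite ext_sub ?half_le.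
- by move=> k; rewrite DeltaS scalerBr scalerA.
- by rewrite c2_0 scale1r /= P0 Delta0.
- by rewrite c2_0 scale1r /= P1 P0 Delta1 Delta0.
- move=> k; rewrite !c2_0 mulr1.
  rewrite (_ : qintz ((k.+1)%:Z + 1) = qint k.+2); last by rewrite (_ : (k.+1)%:Z + 1 = (k.+2)%:Z) //; lia.
  rewrite mulVf //; exact: qint_neq0.
- exact: cS2.
Qed.

Theorem theorem2p7 (t : bool) (n : nat) :
  P t n =
    \sum_(0 <= m < (n./2).+1)
      (qpow (- (m%:Z * (2 * m%:Z + 1 - 2 * dlt t n))) / qden m)
        *: Delta (n - 2 * m)
  /\
  Delta n =
    \sum_(0 <= m < (n./2).+1)
      ((-1) ^+ m * qpow (- (m%:Z * (2 * (1 - dlt t n) + 1))) / qden m)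
        *: P t (n - 2 * m).
Proof. split; [exact: part1 | exact: part2]. Qed.
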